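(* For all integers $a,b\ge0$ and all $M\in\mathcal M_2(a,b)$ we have $\psi(M)=-1$ if $a=0$ and $b\ge1$, and $\psi(M)=1$ otherwise.
   Context: $\mathcal M_2(a,b)$ is the set of $M\in\mathrm{GL}_2(\mathbb Z_2)$ such that the kernel of $M-I$ on $(\mathbb Q_2/\mathbb Z_2)^2$ is isomorphic to $\mathbb Z/2^a\mathbb Z\times\mathbb Z/2^{a+b}\mathbb Z$. $\psi$ is the unique non-trivial character $\mathrm{GL}_2(\mathbb Z/2\mathbb Z)\to\{\pm1\}$ (the sign character under an isomorphism with $S_3$), evaluated on $M$ via reduction modulo $2$. *)

(* Defs.v *)
From HB Require Import structures.
From mathcomp Require Import all_boot all_order all_algebra all_fingroup.
Set Implicit Arguments. Unset Strict Implicit. Unset Printing Implicit Defensive.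
Import Order.TTheory GRing.Theory Num.Theory.
Local Open Scope ring_scope.

(* A matrix over Z_2 is a compatible family of its reductions modulo 2^(n+1),
   n = 0, 1, 2, ...  (the inverse limit  M_2(Z_2) = lim M_2(Z/2^(n+1)) ). *)
Definition Z2mat := forall n : nat, 'M['Z_(2 ^ n.+1)]_2.

Definition red_step (n : nat) (x : 'Z_(2 ^ n.+2)) : 'Z_(2 ^ n.+1) := (val x)%:R.

Definition Z2mat_coherent (M : Z2mat) : Prop :=
  forall n, map_mx (@red_step n) (M n.+1) = M n.

Definition in_GL2Z2 (M : Z2mat) : Prop :=
  Z2mat_coherent M /\ forall n, M n \in unitmx.

Definition red2 (M : Z2mat) : 'M['Z_2]_2 :=
  map_mx (fun x : 'Z_(2 ^ 1) => ((val x)%:R : 'Z_2)) (M 0%N).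

(* ---------- Q_2/Z_2, realized as dyadic rationals in [0,1) ---------- *)
Definition frac (r : rat) : rat := r - (Num.floor r)%:~R.

Definition dlev (q : rat) : nat := logn 2 `|denq q|%N.

Definition inQ2Z2 (q : rat) : bool :=
  (0 <= q) && (q < 1) && (`|denq q|%N == 2 ^ dlev q)%N.

Definition vQ2Z2 (v : 'cV[rat]_2) : bool := inQ2Z2 (v 0 0) && inQ2Z2 (v 1 0).

Definition addQZ (v w : 'cV[rat]_2) : 'cV[rat]_2 := \col_i frac (v i 0 + w i 0).

(* action of A in M_2(Z_2) on (Q_2/Z_2)^2: for v killed by 2^m, use the
   reduction of A modulo 2^(m+1) (any integer lift works). *)
Definition actZ2 (A : Z2mat) (v : 'cV[rat]_2) : 'cV[rat]_2 :=
  let m := maxn (dlev (v 0 0)) (dlev (v 1 0)) in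
  \col_i frac (\sum_j ((val (A m i j))%:R * v j 0)).

Definition subI (M : Z2mat) : Z2mat := fun n => M n - 1%:M.

Definition kerMI (M : Z2mat) : pred 'cV[rat]_2 :=
  fun v => vQ2Z2 v && (actZ2 (subI M) v == 0).

Lemma ord_pos (m : nat) (i : 'I_m) : (0 < m)%N.
Proof. exact: leq_ltn_trans (leq0n i) (ltn_ord i). Qed.

(* addition in Z/mZ on 'I_m (valid for every m >= 1, including m = 1) *)
Definition cyc_add (m : nat) (i j : 'I_m) : 'I_m :=
  Ordinal (ltn_pmod (i + j) (ord_pos i)).

Definition prod_add (m1 m2 : nat) (x y : 'I_m1 * 'I_m2) : 'I_m1 * 'I_m2 :=
  (cyc_add x.1 y.1, cyc_add x.2 y.2).

Definition isom_cyc2 (K : pred 'cV[rat]_2) (m1 m2 : nat) : Prop :=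
  exists f : 'I_m1 * 'I_m2 -> 'cV[rat]_2,
    [/\ forall x, K (f x),
        injective f,
        forall v, K v -> exists x, f x = v
      & forall x y, f (prod_add x y) = addQZ (f x) (f y)].

Definition inM2 (a b : nat) (M : Z2mat) : Prop :=
  in_GL2Z2 M /\ isom_cyc2 (kerMI M) (2 ^ a) (2 ^ (a + b)).

Definition sign_char (psi : 'M['Z_2]_2 -> int) : Prop :=
  [/\ forall A, A \in unitmx -> (psi A = 1 \/ psi A = -1),
      forall A B, A \in unitmx -> B \in unitmx -> psi (A *m B) = psi A * psi B
    & exists2 A, A \in unitmx & psi A != 1].

(* Main.v *)
Require Import Defs.
From HB Require Import structures.
From mathcomp Require Import all_boot all_order all_algebra all_fingroup.
From mathcomp Require Import zify lra.
Import Order.TTheory GRing.Theory Num.Theory.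
Local Open Scope ring_scope.

Lemma Z2_cases (x : 'Z_2) : x = 0 \/ x = 1.
Proof. case: x => [[|[|k]] Hk]; [left|right|by []]; exact: val_inj. Qed.

Definition mk (a b c d : 'Z_2) : 'M['Z_2]_2 :=
  \matrix_(i, j) if i == 0 then (if j == 0 then a else b) else (if j == 0 then c else d).

Lemma ord2_cases (i : 'I_2) : i = 0 \/ i = 1.
Proof. case: i => [[|[|k]] Hk]; [left|right|by []]; exact: val_inj. Qed.

Lemma mkE (A : 'M['Z_2]_2) : A = mk (A 0 0) (A 0 1) (A 1 0) (A 1 1).
Proof.
apply/matrixP => i j; rewrite mxE.
by case: (ord2_cases i) => ->; case: (ord2_cases j) => ->.
Qed.

Lemma mulmk a b c d a' b' c' d' :
  mk a b c d *m mk a' b' c' d' =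
  mk (a*a' + b*c') (a*b' + b*d') (c*a' + d*c') (c*b' + d*d').
Proof.
apply/matrixP => i j; rewrite !mxE !big_ord_recr !big_ord0  !mxE.
by case: (ord2_cases i) => ->; case: (ord2_cases j) => ->; rewrite /= add0r.
Qed.

Lemma det2 (A : 'M['Z_2]_2) : \det A = A 0 0 * A 1 1 - A 0 1 * A 1 0.
Proof.
rewrite (expand_det_row _ 0) big_ord_recr big_ord_recr big_ord0 /cofactor !det_mx11 !mxE.
rewrite (_ : widen_ord _ _ = 0); last exact: val_inj.
rewrite (_ : ord_max = 1 :> 'I_2); last exact: val_inj.
rewrite (_ : lift 0 0 = 1 :> 'I_2); last exact: val_inj.
rewrite (_ : lift 1 0 = 0 :> 'I_2); last exact: val_inj.
rewrite /= add0r expr0 expr1 mul1r mulN1r.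
by rewrite mulrN.
Qed.


Definition I2 := mk 1 0 0 1.
Definition J := mk 1 1 0 1.
Definition K := mk 1 0 1 1.
Definition L := mk 0 1 1 0.
Definition C := mk 1 1 1 0.
Definition D := mk 0 1 1 1.

Lemma unit_cases (A : 'M['Z_2]_2) : A \in unitmx ->
  A = I2 \/ A = J \/ A = K \/ A = L \/ A = C \/ A = D.
Proof.
rewrite (mkE A) unitmxE det2 !mxE /=.
by case: (Z2_cases (A 0 0)) => ->; case: (Z2_cases (A 0 1)) => ->;
   case: (Z2_cases (A 1 0)) => ->; case: (Z2_cases (A 1 1)) => ->;
   rewrite /I2 /J /K /L /C /D; do ?[by []|by left|by right;left|by right;right;left|by right;right;right;left
   |by right;right;right;right;left|by right;right;right;right;right].
Qed.

Lemma unit_mk a b c d : a * d - b * c = 1 -> mk a b c d \in unitmx.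
Proof. by move=> h; rewrite unitmxE det2 !mxE /= h unitr1. Qed.

Lemma I2u : I2 \in unitmx. Proof. by apply: unit_mk; apply/eqP. Qed.
Lemma Ju : J \in unitmx. Proof. by apply: unit_mk; apply/eqP. Qed.
Lemma Ku : K \in unitmx. Proof. by apply: unit_mk; apply/eqP. Qed.
Lemma Lu : L \in unitmx. Proof. by apply: unit_mk; apply/eqP. Qed.
Lemma Cu : C \in unitmx. Proof. by apply: unit_mk; apply/eqP. Qed.
Lemma Du : D \in unitmx. Proof. by apply: unit_mk; apply/eqP. Qed.

Lemma JJ : J *m J = I2. Proof. rewrite mulmk; congr mk; exact/eqP. Qed.
Lemma CC : C *m C = D. Proof. rewrite mulmk; congr mk; exact/eqP. Qed.
Lemma DD : D *m D = C. Proof. rewrite mulmk; congr mk; exact/eqP. Qed.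
Lemma JK : J *m K = D. Proof. rewrite mulmk; congr mk; exact/eqP. Qed.
Lemma LJ : L *m J = D. Proof. rewrite mulmk; congr mk; exact/eqP. Qed.

Lemma sq1 (x : int) : x = 1 \/ x = -1 -> x * x = 1.
Proof. by case=> ->. Qed.

Lemma psi_vals (psi : 'M['Z_2]_2 -> int) : sign_char psi ->
  [/\ psi I2 = 1, psi C = 1, psi D = 1 & [/\ psi J = -1, psi K = -1 & psi L = -1]].
Proof.
case=> pm pM [A Au psiA].
have pI : psi I2 = 1 by rewrite -JJ pM ?Ju // sq1 //; exact: pm _ Ju.
have pC : psi C = 1 by rewrite -DD pM ?Du // sq1 //; exact: pm _ Du.
have pD : psi D = 1 by rewrite -CC pM ?Cu // sq1 //; exact: pm _ Cu.
have eJK : psi J = psi K.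
  have := pM _ _ Ju Ku; rewrite JK pD.
  by case: (pm _ Ju) => ->; case: (pm _ Ku) => ->.
have eLJ : psi L = psi J.
  have := pM _ _ Lu Ju; rewrite LJ pD.
  by case: (pm _ Ju) => ->; case: (pm _ Lu) => ->.
have pJ : psi J = -1.
  move: psiA; case: (unit_cases _ Au) => [->|[->|[->|[->|[->|->]]]]]; rewrite ?pI ?pC ?pD //.
  - by case: (pm _ Ju) => ->.
  - by rewrite eJK; case: (pm _ Ku) => ->.
  - by rewrite -eLJ; case: (pm _ Lu) => ->.
by split=> //; split; rewrite -?eJK ?eLJ.
Qed.

Definition phi (z : 'Z_(2 ^ 2)) : 'Z_2 := (val z)%:R.

Lemma valZ2 n : val (n%:R : 'Z_2) = (n %% 2)%N.
Proof. by rewrite Zp_nat. Qed.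

Lemma natZ2_mod4 n : ((n %% 4)%N%:R : 'Z_2) = n%:R.
Proof. by apply/val_inj; rewrite !valZ2 modn_dvdm. Qed.

Lemma phiD z w : phi (z + w) = phi z + phi w.
Proof.
rewrite /phi.
have -> : val (z + w) = ((val z + val w) %% 4)%N by [].
by rewrite natZ2_mod4 natrD.
Qed.

Lemma phiN w : phi (- w) = - phi w.
Proof.
rewrite /phi.
have -> : val (- w) = ((4 - val w) %% 4)%N by [].
rewrite natZ2_mod4 natrB; last exact: ltnW (ltn_ord w).
by rewrite (_ : 4%:R = 0 :> 'Z_2) ?sub0r //; apply/val_inj.
Qed.

Lemma phiB z w : phi (z - w) = phi z - phi w.
Proof. by rewrite phiD phiN. Qed.

Lemma red2E (M : Z2mat) i j : Z2mat_coherent M ->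
  red2 M i j = phi (M 1%N i j).
Proof.
move=> coh; rewrite /red2 mxE -(coh 0%N) mxE /red_step /phi.
apply/val_inj; rewrite !valZ2 /=.
by rewrite modn_mod.
Qed.

Lemma subIE (M : Z2mat) i j : Z2mat_coherent M ->
  phi (subI M 1%N i j) = red2 M i j - (i == j)%:R.
Proof.
move=> coh; rewrite red2E // /subI !mxE phiB; congr (_ - _).
by case: (i == j); apply/val_inj.
Qed.

Lemma frac_half (n : nat) : Defs.frac (n%:R / 2) = (odd n)%:R / 2.
Proof.
have E : (n%:R : rat) = (odd n)%:R + 2 * (n./2)%:R.
  by rewrite -{1}(odd_double_half n) natrD -mul2n natrM.
have F : Num.floor (n%:R / 2 : rat) = (n./2)%:Z.
  apply: floor_def; rewrite E intrD -!pmulrn.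
  by apply/andP; split; case: (odd n) => /=; lra.
rewrite /Defs.frac F -pmulrn E.
case: (odd n) => /=; lra.
Qed.

Lemma frac_half0 (n : nat) : (Defs.frac (n%:R / 2) == 0) = ((n%:R : 'Z_2) == 0).
Proof.
rewrite frac_half.
have -> : (n%:R : 'Z_2) == 0 = (val (n%:R : 'Z_2) == 0%N) by [].
rewrite valZ2 modn2; case: (odd n) => //=.
Qed.

Definition h (x y : bool) : 'cV[rat]_2 := \col_i ((if i == 0 then x else y)%:R / 2).


Lemma col2_eq0 (v : 'cV[rat]_2) : (v == 0) = (v 0 0 == 0) && (v 1 0 == 0).
Proof.
apply/eqP/andP => [->|[/eqP a /eqP b]]; first by rewrite !mxE.
apply/matrixP => i j; rewrite ord1 mxE.
by case: (ord2_cases i) => ->.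
Qed.

Lemma sum2 (F : 'I_2 -> rat) : \sum_j F j = F 0 + F 1.
Proof.
rewrite big_ord_recl big_ord1.
by rewrite (_ : lift 0 0 = 1 :> 'I_2) //; apply/val_inj.
Qed.

Lemma act_h (S : Z2mat) x y : (x || y) ->
  actZ2 S (h x y) = \col_i Defs.frac ((val (S 1%N i 0) * x + val (S 1%N i 1) * y)%:R / 2).
Proof.
move=> xy; rewrite /actZ2.
have -> : maxn (dlev (h x y 0 0)) (dlev (h x y 1 0)) = 1%N.
  by rewrite !mxE /=; case: x y xy => [] [] //=; vm_compute.
apply/matrixP => i j; rewrite !mxE sum2 !mxE /=.
congr Defs.frac; rewrite natrD !natrM.
by case: x y {xy} => [] [] /=; rewrite ?mulr0 ?mulr1 ?addr0 ?add0r ?mulrDl.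
Qed.

Lemma subIE' (M : Z2mat) i j : Z2mat_coherent M ->
  ((val (M 1%N i j - (i == j)%:R))%:R : 'Z_2) = (val (M 0%N i j))%:R - (i == j)%:R.
Proof. by move=> coh; have := @subIE M i j coh; rewrite /phi /subI /red2 !mxE. Qed.

Lemma kerh (M : Z2mat) x y : Z2mat_coherent M ->
  kerMI M (h x y) =
  ((red2 M 0 0 - 1) * x%:R + red2 M 0 1 * y%:R == 0) &&
  (red2 M 1 0 * x%:R + (red2 M 1 1 - 1) * y%:R == 0).
Proof.
move=> coh.
have vh : vQ2Z2 (h x y) by rewrite /vQ2Z2 !mxE /=; case: x; case: y; vm_compute.
rewrite /kerMI vh /=.
case: (boolP (x || y)) => xy.
  rewrite act_h // col2_eq0 !mxE !frac_half0 !natrD !natrM.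
  by rewrite !subIE' //= !subr0.
move: xy; clear vh; case: x; case: y => //= _.
rewrite !mulr0 !addr0 eqxx.
apply/eqP/matrixP => i j; rewrite !mxE sum2 !mxE /=.
rewrite !mul0r !mulr0 addr0; vm_compute; reflexivity.
Qed.

Lemma frac0E (q : rat) : Defs.frac q = 0 -> q = (Num.floor q)%:~R.
Proof. by rewrite /Defs.frac => /eqP; rewrite subr_eq0 => /eqP. Qed.

Lemma int01 (z : int) : 0 <= (z%:~R : rat) < 2 -> z = 0 \/ z = 1.
Proof.
have -> : (2:rat) = (2:int)%:~R by [].
rewrite ler0z ltr_int => /andP [a b]; lia.
Qed.

Lemma inQ_bounds q : inQ2Z2 q -> 0 <= q < 1.
Proof. by case/andP => /andP [-> ->]. Qed.

Lemma tors_entry (q : rat) : inQ2Z2 q -> Defs.frac (q + q) = 0 ->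
  q = 0%:R / 2 \/ q = 1%:R / 2.
Proof.
move=> /inQ_bounds /andP [q0 q1] /frac0E E.
have : 0 <= ((Num.floor (q + q))%:~R : rat) < 2 by rewrite -E; apply/andP; split; lra.
case/int01 => Z; rewrite Z in E.
  by left; move: E; rewrite mul0r /= => E; lra.
by right; move: E => /= E; lra.
Qed.

Lemma tors_fix (q : rat) : inQ2Z2 q -> Defs.frac (q + q) = q -> q = 0.
Proof.
move=> /inQ_bounds /andP [q0 q1]; rewrite /Defs.frac => E.
have E' : q = (Num.floor (q + q))%:~R by lra.
have : 0 <= ((Num.floor (q + q))%:~R : rat) < 2 by rewrite -E'; apply/andP; split; lra.
case/int01 => Z; rewrite Z in E'; move: E' => /= E'; lra.
Qed.

Lemma tors_entry' (q : rat) : inQ2Z2 q -> Defs.frac (q + q) = 0 ->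
  exists b : bool, q = b%:R / 2.
Proof. by move=> a c; case: (tors_entry _ a c) => ->; [exists false|exists true]. Qed.

Lemma tors_vec v : vQ2Z2 v -> addQZ v v = 0 -> exists x y, v = h x y.
Proof.
case/andP => v0 v1 E.
have E0 : Defs.frac (v 0 0 + v 0 0) = 0 by move/matrixP: E => /(_ 0 0); rewrite !mxE.
have E1 : Defs.frac (v 1 0 + v 1 0) = 0 by move/matrixP: E => /(_ 1 0); rewrite !mxE.
have [x Hx] := tors_entry' _ v0 E0; have [y Hy] := tors_entry' _ v1 E1.
exists x, y; apply/matrixP => i j; rewrite ord1 !mxE.
by case: (ord2_cases i) => -> /=.
Qed.

Lemma fix_vec v : vQ2Z2 v -> addQZ v v = v -> v = 0.
Proof.
case/andP => v0 v1 E.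
have E0 : Defs.frac (v 0 0 + v 0 0) = v 0 0 by move/matrixP: E => /(_ 0 0); rewrite !mxE.
have E1 : Defs.frac (v 1 0 + v 1 0) = v 1 0 by move/matrixP: E => /(_ 1 0); rewrite !mxE.
apply/matrixP => i j; rewrite ord1 !mxE.
case: (ord2_cases i) => ->; [exact: tors_fix _ v0 E0|exact: tors_fix _ v1 E1].
Qed.

Lemma h_tors x y : addQZ (h x y) (h x y) = 0.
Proof.
apply/matrixP => i j; rewrite !mxE.
by case: (ord2_cases i) => -> /=; case: x; case: y; vm_compute.
Qed.

Lemma h_eq0 x y : (h x y == 0) = ~~ (x || y).
Proof.
rewrite col2_eq0 !mxE /=.
by case: x; case: y; vm_compute.
Qed.

Lemma h_inj x y x' y' : h x y = h x' y' -> x = x' /\ y = y'.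
Proof.
move/matrixP => E; have := E 0 0; have := E 1 0; clear E; rewrite !mxE /=.
by case: x; case: y; case: x'; case: y'; vm_compute.
Qed.

Lemma pos2 k : (0 < 2 ^ k)%N. Proof. by rewrite expn_gt0. Qed.

Lemma tors_exists k : (0 < k)%N ->
  exists t : 'I_(2 ^ k), (val t != 0%N) /\ (val (cyc_add t t) = 0%N).
Proof.
case: k => // k _.
have lt : (2 ^ k < 2 ^ k.+1)%N by rewrite ltn_exp2l.
exists (Ordinal lt); split; first by rewrite /= -lt0n pos2.
by rewrite /= addnn -mul2n -expnS modnn.
Qed.

Lemma tors_uniq k (s t : 'I_(2 ^ k)) : val s != 0%N -> val t != 0%N ->
  val (cyc_add s s) = 0%N -> val (cyc_add t t) = 0%N -> s = t.
Proof.
move=> s0 t0 hs ht; apply/val_inj.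
have key : forall u : 'I_(2 ^ k), val u != 0%N -> val (cyc_add u u) = 0%N -> (u + u = 2 ^ k)%N.
  move=> u u0 /= hu.
  have := divn_eq (u + u) (2 ^ k); rewrite hu addn0.
  have ltu := ltn_ord u.
  have : ((u + u) %/ 2 ^ k < 2)%N.
    rewrite ltn_divLR ?pos2 //; move: ltu; clear; lia.
  case: ((u + u) %/ 2 ^ k)%N => [|[|//]] _; last by rewrite mul1n.
  by rewrite mul0n => /eqP; rewrite addn_eq0 (negbTE u0).
have := key s s0 hs; have := key t t0 ht; rewrite -[val s]/(nat_of_ord s) -[val t]/(nat_of_ord t); lia.
Qed.

Lemma transfer m1 m2 (M : Z2mat) (f : 'I_m1 * 'I_m2 -> 'cV[rat]_2) (z0 : 'I_m1 * 'I_m2) :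
  (forall x, kerMI M (f x)) -> injective f ->
  (forall x y, f (prod_add x y) = addQZ (f x) (f y)) ->
  val z0.1 = 0%N -> val z0.2 = 0%N ->
  [/\ f z0 = 0,
      forall x, prod_add x x = z0 -> exists b c, f x = h b c,
      forall x, (f x == 0) = (x == z0)
    & forall x, addQZ (f x) (f x) = 0 -> prod_add x x = z0].
Proof.
move=> fK finj fhom h1 h2.
have pz : prod_add z0 z0 = z0.
  move: h1 h2; case: z0 => [u v] /= hu hv.
  by rewrite /prod_add /=; congr pair; apply/val_inj; rewrite /= ?hu ?hv mod0n.
have vQ : forall x, vQ2Z2 (f x) by move=> x; have /andP [] := fK x.
have f0 : f z0 = 0 by apply: fix_vec (vQ _) _; rewrite -fhom pz.
split=> //.
- move=> x hx; apply: tors_vec (vQ _) _; by rewrite -fhom hx.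
- by move=> x; apply/eqP/eqP => [E|->//]; apply: finj; rewrite E.
- by move=> x E; apply: finj; rewrite fhom E.
Qed.

Definition z0 a b : 'I_(2 ^ a) * 'I_(2 ^ (a + b)) := (Ordinal (pos2 a), Ordinal (pos2 (a + b))).

Definition Fprops a b M (f : 'I_(2 ^ a) * 'I_(2 ^ (a + b)) -> 'cV[rat]_2) :=
  [/\ forall x, kerMI M (f x), injective f,
      forall v, kerMI M v -> exists x, f x = v
    & forall x y, f (prod_add x y) = addQZ (f x) (f y)].

Lemma pa_eq m1 m2 (x y : 'I_m1 * 'I_m2) : val x.1 = val y.1 -> val x.2 = val y.2 -> x = y.
Proof. by case: x y => [? ?] [? ?] /= e1 e2; congr pair; exact: val_inj. Qed.

Lemma tors_pair a b (x : 'I_(2 ^ a) * 'I_(2 ^ (a + b))) :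
  prod_add x x = z0 a b ->
  val (cyc_add x.1 x.1) = 0%N /\ val (cyc_add x.2 x.2) = 0%N.
Proof. by move=> E; split; [exact: (congr1 (fun p => val p.1) E)|exact: (congr1 (fun p => val p.2) E)]. Qed.

Lemma mk_tors a b (u : 'I_(2 ^ a)) (v : 'I_(2 ^ (a + b))) :
  val (cyc_add u u) = 0%N -> val (cyc_add v v) = 0%N -> prod_add (u, v) (u, v) = z0 a b.
Proof. by move=> hu hv; apply: pa_eq. Qed.

Lemma z0_cyc k : val (cyc_add (Ordinal (pos2 k)) (Ordinal (pos2 k))) = 0%N.
Proof. by rewrite /= mod0n. Qed.

Lemma case_id a b M f : Fprops a b M f ->
  kerMI M (h true false) -> kerMI M (h false true) -> a != 0%N.
Proof.
case=> fK finj fsurj fhom k1 k2.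
have [f0 ftors fz ftors'] := @transfer _ _ M f (z0 a b) fK finj fhom erefl erefl.
apply/negP => /eqP a0.
have [x1 e1] := fsurj _ k1; have [x2 e2] := fsurj _ k2.
have t1 := ftors' x1; rewrite e1 h_tors in t1; have {}t1 := t1 erefl.
have t2 := ftors' x2; rewrite e2 h_tors in t2; have {}t2 := t2 erefl.
have n1 : x1 != z0 a b by rewrite -fz e1 h_eq0.
have n2 : x2 != z0 a b by rewrite -fz e2 h_eq0.
have v0 : forall u : 'I_(2 ^ a), val u = 0%N.
  by move=> u; have : (val u < 2 ^ a)%N := ltn_ord u; move: (val u) => n; rewrite a0 expn0; case: n.
have nz : forall x : 'I_(2 ^ a) * 'I_(2 ^ (a + b)), x != z0 a b -> val x.2 != 0%N.
  move=> x xn; apply/eqP => e; move/eqP: xn; apply; apply: pa_eq; [by rewrite !v0 | by rewrite e].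
have [_ c1] := @tors_pair _ _ _ t1; have [_ c2] := @tors_pair _ _ _ t2.
have E : x1 = x2.
  apply: pa_eq; first by rewrite !v0.
  by rewrite (@tors_uniq _ _ _ (nz _ n1) (nz _ n2) c1 c2).
by move: e1; rewrite E e2 => /h_inj [].
Qed.

Lemma nonzero_tors a b M f (x : 'I_(2 ^ a) * 'I_(2 ^ (a + b))) : Fprops a b M f ->
  prod_add x x = z0 a b -> x != z0 a b ->
  exists p q, [/\ f x = h p q, kerMI M (h p q) & p || q].
Proof.
case=> fK finj fsurj fhom tx nx.
have [f0 ftors fz ftors'] := @transfer _ _ M f (z0 a b) fK finj fhom erefl erefl.
have [p [q e]] := ftors x tx.
exists p, q; split=> //; first by rewrite -e.
by move: (fz x); rewrite e h_eq0 (negbTE nx) => /negbFE.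
Qed.

Lemma case_3 a b M f : Fprops a b M f ->
  (forall x y, kerMI M (h x y) -> ~~ (x || y)) -> ~ (a = 0%N /\ (1 <= b)%N).
Proof.
move=> F H [a0 b1].
have [t [t0 tt]] := @tors_exists (a + b) (leq_trans b1 (leq_addl _ _)).
set x := (Ordinal (pos2 a), t).
have tx : prod_add x x = z0 a b by apply: mk_tors; rewrite ?z0_cyc.
have nx : x != z0 a b by apply/eqP => /(congr1 (fun p => val p.2)) /= /eqP; apply/negP.
have [p [q [_ k pq]]] := @nonzero_tors _ _ _ _ _ F tx nx.
by move: (H _ _ k); rewrite pq.
Qed.

Lemma ord1_val k (u : 'I_(2 ^ k)) : k = 0%N -> val u = 0%N.
Proof. by move=> k0; move: u; rewrite k0 => -[[|]]. Qed.

Lemma case_inv a b M f (b0 c0 : bool) : Fprops a b M f ->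
  b0 || c0 -> kerMI M (h b0 c0) ->
  (forall x y, kerMI M (h x y) -> x || y -> x = b0 /\ y = c0) ->
  a = 0%N /\ (1 <= b)%N.
Proof.
move=> F bc kb H.
have a0 : a = 0%N.
  case: (posnP a) => // an0; exfalso.
  have [t1 [t10 tt1]] := @tors_exists a an0.
  have [t2 [t20 tt2]] := @tors_exists (a + b) (leq_trans an0 (leq_addr _ _)).
  set x1 := (t1, Ordinal (pos2 (a + b))).
  set x2 := (Ordinal (pos2 a), t2).
  have tx1 : prod_add x1 x1 = z0 a b by apply: mk_tors; rewrite ?z0_cyc.
  have tx2 : prod_add x2 x2 = z0 a b by apply: mk_tors; rewrite ?z0_cyc.
  have nx1 : x1 != z0 a b by apply/eqP => /(congr1 (fun p => val p.1)) /= /eqP; apply/negP.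
  have nx2 : x2 != z0 a b by apply/eqP => /(congr1 (fun p => val p.2)) /= /eqP; apply/negP.
  have [p1 [q1 [e1 k1 pq1]]] := @nonzero_tors _ _ _ _ _ F tx1 nx1.
  have [p2 [q2 [e2 k2 pq2]]] := @nonzero_tors _ _ _ _ _ F tx2 nx2.
  have [P1 Q1] := H _ _ k1 pq1; have [P2 Q2] := H _ _ k2 pq2.
  case: F => fK finj _ _.
  have E : x1 = x2 by apply: finj; rewrite e1 e2 P1 Q1 P2 Q2.
  by move: t10; rewrite [val t1](congr1 (fun p => val p.1) E).
split=> //; rewrite lt0n; apply/negP => /eqP b0'.
case: F => fK finj fsurj fhom.
have [f0 ftors fz ftors'] := @transfer _ _ M f (z0 a b) fK finj fhom erefl erefl.
have [x ex] := fsurj _ kb.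
have : x == z0 a b.
  apply/eqP; apply: pa_eq => /=.
    exact: ord1_val.
  by apply: ord1_val; rewrite a0 b0'.
by rewrite -fz ex h_eq0 bc.
Qed.

Lemma red2_unit (M : Z2mat) : in_GL2Z2 M -> red2 M \in unitmx.
Proof.
case=> _ units.
have -> : red2 M = M 0%N :> 'M['Z_2]_2.
  apply/matrixP => i j; rewrite mxE; apply/val_inj; rewrite valZ2 /= modn_small //.
exact (units 0%N).
Qed.

Theorem lemma6p3 (a b : nat) (M : Z2mat) (psi : 'M['Z_2]_2 -> int) :
  sign_char psi -> inM2 a b M ->
  psi (red2 M) = (if (a == 0)%N && (1 <= b)%N then -1 else 1).
Proof.
move=> hpsi [[coh units] [f [fK finj fsurj fhom]]].
have F : Fprops a b M f by split.
have [pI pC pD [pJ pK pL]] := @psi_vals _ hpsi.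
have Ru : red2 M \in unitmx by apply: red2_unit.
have KH := fun x y => @kerh M x y coh.
case: (unit_cases _ Ru) => [RE|[RE|[RE|[RE|[RE|RE]]]]]; rewrite RE in KH *;
  rewrite /I2 /J /K /L /C /D !mxE /= in KH.
- rewrite pI.
  have k1 : kerMI M (h true false) by rewrite KH.
  have k2 : kerMI M (h false true) by rewrite KH.
  by have /negbTE -> := @case_id _ _ _ _ F k1 k2.
- rewrite pJ.
  have k : kerMI M (h true false) by rewrite KH.
  have H : forall x y, kerMI M (h x y) -> x || y -> x = true /\ y = false.
    by move=> x y; rewrite KH; case: x; case: y.
  by have [-> ->] := @case_inv _ _ _ _ true false F erefl k H.
- rewrite pK.
  have k : kerMI M (h false true) by rewrite KH.
  have H : forall x y, kerMI M (h x y) -> x || y -> x = false /\ y = true.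
    by move=> x y; rewrite KH; case: x; case: y.
  by have [-> ->] := @case_inv _ _ _ _ false true F erefl k H.
- rewrite pL.
  have k : kerMI M (h true true) by rewrite KH.
  have H : forall x y, kerMI M (h x y) -> x || y -> x = true /\ y = true.
    by move=> x y; rewrite KH; case: x; case: y.
  by have [-> ->] := @case_inv _ _ _ _ true true F erefl k H.
- rewrite pC.
  have H : forall x y, kerMI M (h x y) -> ~~ (x || y).
    by move=> x y; rewrite KH; case: x; case: y.
  case: ifP => // /andP [/eqP a0 b1]; exfalso; exact: (@case_3 _ _ _ _ F H).
- rewrite pD.
  have H : forall x y, kerMI M (h x y) -> ~~ (x || y).
    by move=> x y; rewrite KH; case: x; case: y.
  case: ifP => // /andP [/eqP a0 b1]; exfalso; exact: (@case_3 _ _ _ _ F H).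
Qed.
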